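(* Let $\mathcal A$ be a transitive Lie algebroid over $M$ with kernel $\mathcal L$ and let $\widehat g$ be an inner non-degenerate metric on $\mathcal A$. Then there exists a unique ordinary connection $\nabla^{\widehat g}$ on $\mathcal A$ such that $\widehat g(\nabla^{\widehat g}_X,\iota(\gamma))=0$ for all $X\in\Gamma(TM)$ and all $\gamma\in\mathcal L$.
   Context: A transitive Lie algebroid over $M$ is a finitely generated projective $C^\infty(M)$-module $\mathcal A$ with a Lie bracket and a surjective $C^\infty(M)$-linear Lie morphism $\rho:\mathcal A\to\Gamma(TM)$ with $[X,fY]=f[X,Y]+(\rho(X)f)Y$; its kernel $\mathcal L=\ker\rho$ is the space of sections of a vector bundle $\mathbb L$ (a locally trivial bundle of Lie algebras), and $\iota:\mathcal L\to\mathcal A$ is the inclusion. A metric on $\mathcal A$ is a symmetric $C^\infty(M)$-bilinear map $\widehat g:\mathcal A\otimes_{C^\infty(M)}\mathcal A\to C^\infty(M)$ (not assumed non-degenerate). It is inner non-degenerate if $h(\gamma,\eta)=\widehat g(\iota\gamma,\iota\eta)$ is a non-degenerate metric on the vector bundle $\mathbb L$. An ordinary connection is a $C^\infty(M)$-linear map $\nabla:\Gamma(TM)\to\mathcal A$ with $\rho\circ\nabla=\mathrm{id}$. *)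

(* Defs.v *)
(* Algebraic (Serre--Swan) rendering of transitive Lie
   algebroids: the ring R plays the role of C^oo(M), the R-module X the role
   of Gamma(TM) (acting on R by derivations D), A the algebroid. *)
From HB Require Import structures.
From mathcomp Require Import all_boot all_order all_algebra.
Set Implicit Arguments. Unset Strict Implicit. Unset Printing Implicit Defensive.
Import GRing.Theory.
Local Open Scope ring_scope.

Definition Rlinear (R : comPzRingType) (U V : lmodType R) (f : U -> V) : Prop :=
  forall (r : R) (u v : U), f (r *: u + v) = r *: f u + f v.

Definition fg_projective (R : comPzRingType) (U : lmodType R) : Prop :=
  exists (n : nat) (i : U -> 'rV[R]_n) (p : 'rV[R]_n -> U),
    Rlinear i /\ Rlinear p /\ (forall u, p (i u) = u).

Definition lie_bracket (V : zmodType) (br : V -> V -> V) : Prop :=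
  (forall x y z, br (x + y) z = br x z + br y z) /\
      (forall x y z, br x (y + z) = br x y + br x z) /\
      (forall x, br x x = 0) /\
      (forall x y z, br x (br y z) + br y (br z x) + br z (br x y) = 0).

Definition vector_fields (R : comPzRingType) (X : lmodType R)
    (brX : X -> X -> X) (D : X -> R -> R) : Prop :=
  fg_projective X /\
  lie_bracket brX /\
  (forall (f : R) (x y : X), D (f *: x + y) = (fun h => f * D x h + D y h)) /\
  (forall x f h, D x (f + h) = D x f + D x h) /\
  (forall x f h, D x (f * h) = f * D x h + h * D x f) /\
  (forall x y f, D (brX x y) f = D x (D y f) - D y (D x f)) /\
  (forall x y (f : R), brX x (f *: y) = f *: brX x y + D x f *: y).

Definition transitive_Lie_algebroid (R : comPzRingType) (X A : lmodType R)
    (brX : X -> X -> X) (D : X -> R -> R)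
    (brA : A -> A -> A) (rho : A -> X) : Prop :=
  vector_fields brX D /\
  fg_projective A /\
  lie_bracket brA /\
  Rlinear rho /\
  (forall x : X, exists a : A, rho a = x) /\
  (forall a b, rho (brA a b) = brX (rho a) (rho b)) /\
  (forall a b (f : R), brA a (f *: b) = f *: brA a b + D (rho a) f *: b).

(* the kernel L = ker rho, as a predicate on A (iota is the inclusion) *)
Definition in_kernel (R : comPzRingType) (X A : lmodType R) (rho : A -> X)
  (a : A) : Prop := rho a = 0.

Definition metric (R : comPzRingType) (A : lmodType R) (g : A -> A -> R) : Prop :=
  (forall a b, g a b = g b a) /\ (forall b, Rlinear (fun a : A => (g a b : R^o))).

(* inner non-degenerate: h = g restricted to L is non-degenerate, i.e. the
   map L -> Hom_R(L, R), gamma |-> h(gamma, .), is bijective *)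
Definition inner_nondegenerate (R : comPzRingType) (X A : lmodType R)
    (rho : A -> X) (g : A -> A -> R) : Prop :=
  (forall gam, in_kernel rho gam ->
     (forall eta, in_kernel rho eta -> g gam eta = 0) -> gam = 0)
  /\ (forall phi : A -> R,
        (forall (r : R) eta eta', in_kernel rho eta -> in_kernel rho eta' ->
           phi (r *: eta + eta') = r * phi eta + phi eta') ->
        exists2 gam, in_kernel rho gam &
          forall eta, in_kernel rho eta -> g gam eta = phi eta).

Definition ordinary_connection (R : comPzRingType) (X A : lmodType R)
    (rho : A -> X) (nabla : X -> A) : Prop :=
  Rlinear nabla /\ (forall x, rho (nabla x) = x).

(* Main.v *)
Require Import Defs.
From Stdlib Require Import ClassicalEpsilon FunctionalExtensionality.
From HB Require Import structures.
From mathcomp Require Import all_boot all_order all_algebra.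
Local Open Scope ring_scope.
Import GRing.Theory.

Lemma Rlin_sub {R : comPzRingType} {U V : lmodType R} {f : U -> V} :
  Rlinear f -> forall u v, f (u - v) = f u - f v.
Proof.
move=> Hf u v.
have := Hf (-1) v u; rewrite !scaleN1r => E.
by rewrite addrC E addrC.
Qed.

Theorem proposition2p6 (R : comPzRingType) (X A : lmodType R)
    (brX : X -> X -> X) (D : X -> R -> R)
    (brA : A -> A -> A) (rho : A -> X) (g : A -> A -> R) :
  transitive_Lie_algebroid brX D brA rho ->
  metric g ->
  inner_nondegenerate rho g ->
  exists! nabla : X -> A,
    ordinary_connection rho nabla /\
    (forall (x : X) (gam : A), in_kernel rho gam -> g (nabla x) gam = 0).
Proof.
move=> [_ [_ [_ [Hrho [Hsurj _]]]]] [gsym glin] [ginj gsurj].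
have gsub : forall a a' b, g (a - a') b = g a b - g a' b.
  by move=> a a' b; have := Rlin_sub (glin b) a a'.
have rsub := Rlin_sub Hrho.
(* key: kernel and orthogonal => 0 *)
have key : forall n1 n2 : X -> A,
  (forall x, rho (n1 x) = x) -> (forall x, rho (n2 x) = x) ->
  (forall x gam, in_kernel rho gam -> g (n1 x) gam = 0) ->
  (forall x gam, in_kernel rho gam -> g (n2 x) gam = 0) ->
  forall x, n1 x = n2 x.
  move=> n1 n2 r1 r2 o1 o2 x; apply/eqP; rewrite -subr_eq0; apply/eqP.
  apply: ginj; first by rewrite /in_kernel rsub r1 r2 subrr.
  by move=> eta He; rewrite gsub o1 // o2 // subrr.
pose a x := proj1_sig (constructive_indefinite_description _ (Hsurj x)).
have Ha : forall x, rho (a x) = x.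
  by move=> x; rewrite /a; case: constructive_indefinite_description.
have Hg : forall x, exists gam, in_kernel rho gam /\
    forall eta, in_kernel rho eta -> g gam eta = g (a x) eta.
  move=> x.
  have [|gam Hk Hgam] := gsurj (fun eta => g (a x) eta).
    move=> r eta eta' _ _; rewrite gsym (glin (a x) r eta eta') /=.
    by rewrite [g eta _]gsym [g eta' _]gsym.
  by exists gam.
pose gm x := proj1_sig (constructive_indefinite_description _ (Hg x)).
have Hgm : forall x, in_kernel rho (gm x) /\
    forall eta, in_kernel rho eta -> g (gm x) eta = g (a x) eta.
  by move=> x; rewrite /gm; case: constructive_indefinite_description.
pose nab x := a x - gm x.
have rn : forall x, rho (nab x) = x.
  by move=> x; rewrite /nab rsub Ha (proj1 (Hgm x)) subr0.
have on : forall x gam, in_kernel rho gam -> g (nab x) gam = 0.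
  by move=> x gam Hk; rewrite /nab gsub (proj2 (Hgm x)) // subrr.
exists nab; split.
  split=> //; split=> //.
  move=> r x y.
  pose n2 z := if z == r *: x + y then r *: nab x + nab y else nab z.
  have := key nab n2 rn _ on _ (r *: x + y); rewrite /n2 eqxx; apply.
    move=> z; case: eqP => [->|//].
    have := Hrho r (nab x) (nab y); rewrite !rn => <-; done.
  move=> z gam Hk; case: eqP => _; last exact: on.
  have := glin gam r (nab x) (nab y); rewrite /= => ->.
  rewrite !on // addr0; exact: mulr0.
move=> n2 [[_ r2] o2]; apply: functional_extensionality => x.
exact: key.
Qed.
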